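(* Let $G$ be a finite connected graph with at least one edge and let $\phi$ be an order map for $G$. Then $\phi$ is tree-compatible if and only if for all spanning trees $T,T'$ of $G$ and every $k\in\{0,\dots,|E(G)|-1\}$, $$T\cap\{\phi_1(T),\dots,\phi_k(T)\}=T'\cap\{\phi_1(T),\dots,\phi_k(T)\}\ \Longrightarrow\ \forall j\in\{1,\dots,k+1\},\ \phi_j(T)=\phi_j(T').$$
   Context: An order map assigns to each spanning tree $T$ of $G$ a total order $\phi(T)$ on $E(G)$; $\phi_k(T)$ denotes the $k$-th smallest edge for $\phi(T)$. Let $m=|E(G)|$. A decision tree is a perfect binary tree of depth $m-1$ whose nodes are labelled by edges of $G$ so that along every root-to-leaf path the labels form a permutation of $E(G)$. For a spanning tree $T$, walk down the decision tree from the root: at each node, if its label is not in $T$ go to the left child, otherwise go to the right child; the sequence of labels $e_1,\dots,e_m$ met defines the $(\Delta,T)$-ordering $e_1<\dots<e_m$. The order map $\phi$ is tree-compatible if there exists a decision tree $\Delta$ such that for every spanning tree $T$ the $(\Delta,T)$-ordering coincides with $\phi(T)$. *)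

(* Defs.v *)
From mathcomp Require Import all_boot.
Set Implicit Arguments. Unset Strict Implicit. Unset Printing Implicit Defensive.

(* A finite (multi)graph: vertex type V, edge type E, each edge has two
   endpoints (ends e).  Loops and parallel edges are allowed. *)
Section Graphs.
Variables (V E : finType) (ends : E -> V * V).

Definition adj (F : {set E}) : rel V :=
  fun x y => [exists e in F, (ends e == (x, y)) || (ends e == (y, x))].

Definition spanning_connected (F : {set E}) : Prop :=
  forall x y : V, connect (adj F) x y.

Definition connected_graph : Prop := spanning_connected setT.

(* (V, F) is acyclic: no edge of F lies on a cycle of F, i.e. no edge e of F
   has its endpoints connected in F minus e (loops are cycles). *)
Definition acyclic (F : {set E}) : Prop :=
  forall e, e \in F -> ~~ connect (adj (F :\ e)) (ends e).1 (ends e).2.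

Definition spanning_tree (T : {set E}) : Prop :=
  spanning_connected T /\ acyclic T.

(* an order map: to every spanning tree a total order on E(G), given as the
   list (phi_1(T), ..., phi_m(T)) of all edges in increasing order
   (index j : 'I_m is 0-based, so tnth (phi T) j = phi_{j+1}(T)). *)
Definition order_map (phi : {set E} -> #|E|.-tuple E) : Prop :=
  forall T, spanning_tree T -> uniq (phi T).

Inductive dtree := DLeaf of E | DNode of E & dtree & dtree.

Fixpoint perfect (d : nat) (t : dtree) : bool :=
  match t, d with
  | DLeaf _, 0 => true
  | DNode _ l r, d'.+1 => perfect d' l && perfect d' r
  | _, _ => false
  end.

Fixpoint dpaths (t : dtree) : seq (seq E) :=
  match t with
  | DLeaf e => [:: [:: e]]
  | DNode e l r => [seq e :: p | p <- dpaths l ++ dpaths r]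
  end.

Definition decision_tree (t : dtree) : Prop :=
  perfect #|E|.-1 t /\ forall p, p \in dpaths t -> perm_eq p (enum E).

Fixpoint dwalk (t : dtree) (T : {set E}) : seq E :=
  match t with
  | DLeaf e => [:: e]
  | DNode e l r => e :: dwalk (if e \in T then r else l) T
  end.

Definition tree_compatible (phi : {set E} -> #|E|.-tuple E) : Prop :=
  exists D : dtree, decision_tree D /\
    forall T, spanning_tree T -> dwalk D T = val (phi T).

End Graphs.

(* Main.v *)
Require Import Defs.
From mathcomp Require Import all_boot.
Set Implicit Arguments. Unset Strict Implicit. Unset Printing Implicit Defensive.

Section Aux.
Variables (V E : finType) (ends : E -> V * V).

Definition stb (T : {set E}) : bool :=
  [forall x, forall y, connect (adj ends T) x y] &&
  [forall e in T, ~~ connect (adj ends (T :\ e)) (ends e).1 (ends e).2].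

Lemma stbP T : stb T <-> spanning_tree ends T.
Proof.
split.
- case/andP => /forallP H1 /forallP H2; split.
  + by move=> x y; move/forallP: (H1 x) => /(_ y).
  + by move=> e eT; move: (H2 e); rewrite eT.
- case=> H1 H2; apply/andP; split.
  + by apply/forallP => x; apply/forallP => y; apply: H1.
  + by apply/forallP => e; apply/implyP => eT; apply: H2.
Qed.

Definition consistent (T : {set E}) (h : seq (E * bool)) :=
  all (fun p => (p.1 \in T) == p.2) h.

Variable phi : {set E} -> #|E|.-tuple E.
Variable e0 : E.

Definition fresh (L : seq E) := head e0 [seq x <- enum E | x \notin L].

Definition cand (h : seq (E * bool)) : option E :=
  let L := map fst h in
  match [pick T | stb T && consistent T h && (take (size h) (phi T) == L)] with
  | Some T0 => Some (nth e0 (phi T0) (size h))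
  | None => None
  end.

Definition label (h : seq (E * bool)) : E :=
  let L := map fst h in
  match cand h with
  | Some c => if c \notin L then c else fresh L
  | None => fresh L
  end.

Fixpoint build (d : nat) (h : seq (E * bool)) : dtree E :=
  let e := label h in
  match d with
  | 0 => DLeaf e
  | d'.+1 => DNode e (build d' (rcons h (e, false))) (build d' (rcons h (e, true)))
  end.

Lemma fresh_notin L : size L < #|E| -> fresh L \notin L.
Proof.
move=> HL; rewrite /fresh.
case E1: [seq x <- enum E | x \notin L] => [|a s] /=.
- exfalso.
  have sub : {subset enum E <= L}.
    move=> x xe; apply/negPn/negP => xL.
    have : x \in [seq x <- enum E | x \notin L] by rewrite mem_filter xL xe.
    by rewrite E1.
  have := uniq_leq_size (enum_uniq E) sub.
  by rewrite -cardE leqNgt HL.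
- have : a \in [seq x <- enum E | x \notin L] by rewrite E1 mem_head.
  by rewrite mem_filter => /andP [].
Qed.

Lemma label_notin h : size h < #|E| -> label h \notin map fst h.
Proof.
move=> Hs; rewrite /label.
have Hf := @fresh_notin (map fst h); rewrite size_map in Hf.
case: (cand h) => [c|]; last by apply: Hf.
by case: ifP => // _; apply: Hf.
Qed.

Lemma perfect_build d h : perfect d (build d h).
Proof. by elim: d h => [|d IH] h //=; rewrite !IH. Qed.

Lemma paths_build d h p : uniq (map fst h) -> size h + d < #|E| ->
  p \in dpaths (build d h) -> uniq (map fst h ++ p) /\ size p = d.+1.
Proof.
elim: d h p => [|d IH] h p Hu Hs /=.
- have Hn := label_notin (leq_ltn_trans (leq_addr _ _) Hs).
  rewrite mem_seq1 => /eqP ->; split => //.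
  by rewrite cat_uniq /= andbT Hu /= orbF.
- have Hn := label_notin (leq_ltn_trans (leq_addr _ _) Hs).
  rewrite map_cat mem_cat => /orP [] /mapP [q Hq ->].
  + have := IH (rcons h (label h, false)) q.
    rewrite map_rcons rcons_uniq Hn Hu size_rcons addSnnS cat_rcons.
    by case/(_ isT Hs Hq) => -> /= ->.
  + have := IH (rcons h (label h, true)) q.
    rewrite map_rcons rcons_uniq Hn Hu size_rcons addSnnS cat_rcons.
    by case/(_ isT Hs Hq) => -> /= ->.
Qed.

Definition Cond := forall T T' : {set E}, spanning_tree ends T -> spanning_tree ends T' ->
   forall k : 'I_#|E|,
     let P := [set tnth (phi T) i | i : 'I_#|E| & i < k] in
     T :&: P = T' :&: P ->
     forall j : 'I_#|E|, j <= k -> tnth (phi T) j = tnth (phi T') j.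

Lemma nth_notin_take (s : seq E) i : uniq s -> i < size s -> nth e0 s i \notin take i s.
Proof.
move=> u lt; move: u; rewrite -{1}(cat_take_drop i s) cat_uniq => /and3P[_ /hasPn H _].
by apply: H; rewrite (drop_nth e0 lt) mem_head.
Qed.

Lemma label_eq (Hom : order_map ends phi) (Hc : Cond) T h :
  spanning_tree ends T -> size h < #|E| -> consistent T h ->
  map fst h = take (size h) (phi T) -> label h = nth e0 (phi T) (size h).
Proof.
move=> sT Hs cT tT; rewrite /label /cand.
case: pickP => [T0 /andP[/andP[sT0 cT0] /eqP tk]| H]; last first.
  by move: (H T); rewrite (proj2 (stbP T) sT) cT tT eqxx.
move/stbP: sT0 => sT0.
have Hu := Hom T0 sT0.
have Hsz : size h < size (phi T0) by rewrite size_tuple.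
have Heq : nth e0 (phi T0) (size h) = nth e0 (phi T) (size h).
  have H := Hc T0 T sT0 sT (Ordinal Hs).
  move: H => /= H.
  have := H _ (Ordinal Hs) (leqnn _); rewrite !(tnth_nth e0) /=; apply.
  apply/setP => x; rewrite !inE.
  case xP: (x \in [set tnth (phi T0) i | i : 'I_#|E| & i < size h]); rewrite ?andbF ?andbT //.
  case/imsetP: xP => j; rewrite inE => jlt ->.
  have : tnth (phi T0) j \in map fst h.
    rewrite -tk (tnth_nth e0) -(nth_take e0 jlt) mem_nth // size_take.
    by rewrite Hsz.
  case/mapP => p ph ->.
  by move/allP: cT0 => /(_ p ph) /eqP ->; move/allP: cT => /(_ p ph) /eqP ->.
by rewrite -tk nth_notin_take.
Qed.

Lemma walk_build (Hom : order_map ends phi) (Hc : Cond) T : spanning_tree ends T ->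
  forall d h, size h + d.+1 = #|E| -> consistent T h ->
  map fst h = take (size h) (phi T) -> dwalk (build d h) T = drop (size h) (phi T).
Proof.
move=> sT; elim=> [|d IH] h Hs cT tT.
- have Hi : size h < #|E| by rewrite -Hs addn1.
  have Hl := label_eq Hom Hc sT Hi cT tT.
  rewrite /= Hl (drop_nth e0) ?size_tuple // drop_oversize //.
  by rewrite size_tuple -Hs addn1.
- have Hi : size h < #|E| by rewrite -Hs addnS ltnS leq_addr.
  have Hl := label_eq Hom Hc sT Hi cT tT.
  rewrite /=.
  have -> : (if label h \in T then build d (rcons h (label h, true))
             else build d (rcons h (label h, false))) =
            build d (rcons h (label h, label h \in T)) by case: (label h \in T).
  rewrite IH ?size_rcons.
  + by rewrite [in RHS](drop_nth e0) ?size_tuple // Hl.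
  + by rewrite addSnnS.
  + by rewrite /consistent all_rcons /= eqxx.
  + by rewrite map_rcons (take_nth e0) ?size_tuple // -Hl tT.
Qed.

Lemma walk_prefix (t : dtree E) (T T' : {set E}) n :
  (forall i, i < n -> (nth e0 (dwalk t T) i \in T) = (nth e0 (dwalk t T) i \in T')) ->
  take n.+1 (dwalk t T) = take n.+1 (dwalk t T').
Proof.
elim: t n => [e|e l IHl r IHr] n.
  by move=> _.
move=> H.
case: n H => [|n] /= H; first by rewrite !take0.
have He : (e \in T) = (e \in T') by apply: (H 0).
rewrite -He; congr (_ :: _).
move: H; case: (e \in T) => H; [apply: IHr | apply: IHl] => i ilt; exact: (H i.+1 ilt).
Qed.

End Aux.

Theorem theorem12p6p1 (V E : finType) (ends : E -> V * V)
  (phi : {set E} -> #|E|.-tuple E) :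
  connected_graph ends -> 0 < #|E| -> order_map ends phi ->
  (tree_compatible ends phi <->
   forall T T' : {set E}, spanning_tree ends T -> spanning_tree ends T' ->
   forall k : 'I_#|E|,
     let P := [set tnth (phi T) i | i : 'I_#|E| & i < k] in
     T :&: P = T' :&: P ->
     forall j : 'I_#|E|, j <= k -> tnth (phi T) j = tnth (phi T') j).
Proof.
move=> Hconn Hpos Hom.
have e0 : E := enum_val (Ordinal Hpos).
split.
- case=> D [_ HD] T T' sT sT' k /= HP j jk.
  rewrite !(tnth_nth e0) -!HD //.
  have jk1 : j < k.+1 by [].
  rewrite -(nth_take e0 jk1) -[in RHS](nth_take e0 jk1) (@walk_prefix _ e0 _ _ T') //.
  move=> i ilt; rewrite HD //.
  have xP : nth e0 (phi T) i \in [set tnth (phi T) i | i : 'I_#|E| & i < k].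
    apply/imsetP; exists (Ordinal (ltn_trans ilt (ltn_ord k))); first by rewrite inE.
    by rewrite (tnth_nth e0).
  have -> : (nth e0 (phi T) i \in T) = (nth e0 (phi T) i \in T :&: [set tnth (phi T) i | i : 'I_#|E| & i < k]) by rewrite inE xP andbT.
  by rewrite HP inE xP andbT.
- move=> Hc; exists (build ends phi e0 #|E|.-1 [::]); split.
  + split; first exact: perfect_build.
    move=> p Hp.
    have Hlt : size (@nil (E * bool)) + #|E|.-1 < #|E| by rewrite add0n prednK.
    have [u sz] := paths_build (isT : uniq (map fst (@nil (E * bool)))) Hlt Hp.
    rewrite /= in u; rewrite prednK // in sz.
    apply: uniq_perm => //; first exact: enum_uniq.
    have [] // := uniq_min_size (s2 := enum E) u (fun x _ => mem_enum _ x).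
    by rewrite sz -cardE.
  + move=> T sT; have := @walk_build _ _ ends phi e0 Hom Hc T sT #|E|.-1 [::].
    rewrite drop0; apply => //=.
    by rewrite add0n prednK. by rewrite take0.
Qed.
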